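(* Let $n\ge1$, $p\in(0,1/2]$, $q=1-p$, and let $X_1,\dots,X_n$ be i.i.d. with $P(X_i=1)=P(X_i=-1)=p$, $P(X_i=0)=1-2p$. For $k\in\{1,\dots,n\}$ let $V_k=q^{n-k}$ and $W_k=2\bigl((1-p)^{n-k}-(1-2p)^{n-k}\bigr)$. Let $s$ be the smallest $k\in\{1,\dots,n\}$ with $W_k/V_k<1$. Then the stopping time ''stop at the first $m\ge s$ with $X_m\in\{-1,1\}$, and at $m=n$ if there is none'' maximizes, over all stopping times $\tau\in\{1,\dots,n\}$ with respect to the natural filtration, the probability that either $X_\tau=1$ and $X_i\ne1$ for all $i>\tau$, or $X_\tau=-1$ and $X_i\ne-1$ for all $i>\tau$. *)

(* Defs.v *)
From HB Require Import structures.
From mathcomp Require Import all_boot all_order all_algebra.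
Set Implicit Arguments. Unset Strict Implicit. Unset Printing Implicit Defensive.
Import Order.TTheory GRing.Theory Num.Theory.
Local Open Scope ring_scope.

(* Outcomes: omega : {ffun 'I_n -> 'I_3}; coordinate i (0-based, i.e. the
   paper's index i+1) encodes the value X_{i+1} = omega i - 1 in {-1,0,1}. *)
Definition outcome (n : nat) := {ffun 'I_n -> 'I_3}.

Definition X (n : nat) (w : outcome n) (i : 'I_n) : int := (nat_of_ord (w i))%:Z - 1.

Definition wt (R : nzRingType) (p : R) (v : int) : R :=
  if v == 0 then 1 - p *+ 2 else p.

Definition Pr_out (R : nzRingType) (n : nat) (p : R) (w : outcome n) : R :=
  \prod_(i < n) wt p (X w i).

Definition Pr (R : nzRingType) (n : nat) (p : R) (E : pred (outcome n)) : R :=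
  \sum_(w : outcome n | E w) Pr_out p w.

(* tau is a stopping time w.r.t. the natural filtration: the event
   {tau = k} depends only on coordinates 0..k. *)
Definition stopping_time (n : nat) (tau : outcome n -> 'I_n) : Prop :=
  forall w w' : outcome n,
    (forall j : 'I_n, (j <= tau w)%N -> w j = w' j) -> tau w' = tau w.

Definition win (n : nat) (tau : outcome n -> 'I_n) (w : outcome n) : bool :=
  ((X w (tau w) == 1) && [forall i : 'I_n, (tau w < i)%N ==> (X w i != 1)])
  || ((X w (tau w) == -1) && [forall i : 'I_n, (tau w < i)%N ==> (X w i != -1)]).

Lemma last_ord_proof (n : nat) (s : 'I_n) : (n.-1 < n)%N.
Proof. by rewrite ltn_predL; apply: leq_ltn_trans (leq0n s) (ltn_ord s). Qed.

Definition last_ord (n : nat) (s : 'I_n) : 'I_n := Ordinal (last_ord_proof s).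

Definition thr_rule (n : nat) (s : 'I_n) (w : outcome n) : 'I_n :=
  head (last_ord s) [seq i : 'I_n <- enum 'I_n | (s <= i)%N && (X w i != 0)].

Definition Vk (R : nzRingType) (n : nat) (p : R) (i : 'I_n) : R :=
  (1 - p) ^+ (n - i.+1).
Definition Wk (R : nzRingType) (n : nat) (p : R) (i : 'I_n) : R :=
  ((1 - p) ^+ (n - i.+1) - (1 - p *+ 2) ^+ (n - i.+1)) *+ 2.

(* Main.v *)
Require Import Defs.
From HB Require Import structures.
From mathcomp Require Import all_boot all_order all_algebra.
From mathcomp Require Import ring lra zify.
Import Order.TTheory GRing.Theory Num.Theory.
Set Implicit Arguments. Unset Strict Implicit. Unset Printing Implicit Defensive.
Local Open Scope ring_scope.

Definition fcons (n : nat) (x : 'I_3) (w : outcome n) : outcome n.+1 :=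
  [ffun i => if unlift ord0 i is Some j then w j else x].

Lemma fcons0 n x (w : outcome n) : fcons x w ord0 = x.
Proof. by rewrite ffunE unlift_none. Qed.

Lemma fconsS n x (w : outcome n) j : fcons x w (lift ord0 j) = w j.
Proof. by rewrite ffunE liftK. Qed.

Lemma sum_split (R : nzRingType) n (F : outcome n.+1 -> R) :
  \sum_(w : outcome n.+1) F w = \sum_(x : 'I_3) \sum_(w : outcome n) F (fcons x w).
Proof.
rewrite pair_big /=.
rewrite (reindex (fun q : 'I_3 * outcome n => fcons q.1 q.2)) //=.
exists (fun w : outcome n.+1 => (w ord0, [ffun j => w (lift ord0 j)])) => [[x w] _|w _] /=.
  by rewrite fcons0; congr pair; apply/ffunP => j; rewrite ffunE fconsS.
apply/ffunP => i; rewrite ffunE; case: unliftP => [j ->|->] //.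
by rewrite ffunE.
Qed.

Lemma Pr_out_cons (R : nzRingType) n (p : R) x (w : outcome n) :
  Pr_out p (fcons x w) = wt p ((nat_of_ord x)%:Z - 1) * Pr_out p w.
Proof.
rewrite /Pr_out big_ord_recl /X fcons0; congr (_ * _).
by apply: eq_bigr => j _; rewrite fconsS.
Qed.

Lemma sum3 (R : nzRingType) (f : 'I_3 -> R) :
  \sum_(x : 'I_3) f x = f (inord 0) + f (inord 1) + f (inord 2).
Proof.
rewrite !big_ord_recl big_ord0 addr0 addrA.
congr (f _ + f _ + f _); apply: val_inj; rewrite /= ?inordK //.
Qed.

Lemma sum_wt (R : comNzRingType) (p : R) :
  \sum_(x : 'I_3) wt p ((nat_of_ord x)%:Z - 1) = 1.
Proof.
rewrite sum3 !inordK // /wt /=.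
by rewrite mulr2n; ring.
Qed.
Lemma Xeq1 (a : 'I_3) : ((nat_of_ord a)%:Z - 1 == 1) = (nat_of_ord a == 2%N).
Proof. by case: a => [[|[|[|k]]] hk]. Qed.
Lemma Xeqm1 (a : 'I_3) : ((nat_of_ord a)%:Z - 1 == -1) = (nat_of_ord a == 0%N).
Proof. by case: a => [[|[|[|k]]] hk]. Qed.

Lemma win_alt n (tau : outcome n -> 'I_n) w :
  win tau w = (nat_of_ord (w (tau w)) != 1%N) &&
              [forall i : 'I_n, (tau w < i)%N ==> (w i != w (tau w))].
Proof.
rewrite /win /X !Xeq1 !Xeqm1.
under eq_forallb => i do rewrite Xeq1.
under [in X in _ || X]eq_forallb => i do rewrite Xeqm1.
under [in X in _ = X]eq_forallb => i do rewrite -val_eqE.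
by case: (w (tau w)) => [[|[|[|k]]] hk] //=; rewrite orbF.
Qed.
Lemma forall_shift n (P : 'I_n.+1 -> bool) (m : nat) :
  [forall i : 'I_n.+1, (m < i)%N ==> P i] =
  [forall j : 'I_n, (m < j.+1)%N ==> P (lift ord0 j)].
Proof.
apply/forallP/forallP => H i.
- by have := H (lift ord0 i); rewrite lift0.
- case: (unliftP ord0 i) => [j ->|->]; first by have := H j; rewrite lift0.
  by apply/implyP; rewrite ltn0.
Qed.

Lemma prod_ind (R : comNzRingType) n (b : 'I_n -> bool) :
  \prod_(j < n) (b j)%:R = ([forall j, b j])%:R :> R.
Proof.
case: (boolP [forall j, b j]) => [/forallP H|].
  by rewrite big1 // => j _; rewrite H.
rewrite negb_forall => /existsP [j Hj].
by rewrite (bigD1 j) //= (negbTE Hj) mul0r.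
Qed.

Lemma stop_val (R : comNzRingType) n (p : R) (c : 'I_3) (hc : nat_of_ord c != 1%N) :
  \sum_(w : outcome n) ([forall j, w j != c])%:R * Pr_out p w = (1 - p) ^+ n.
Proof.
transitivity (\sum_(w : {ffun 'I_n -> 'I_3}) \prod_(j < n)
     ((w j != c)%:R * wt p ((nat_of_ord (w j))%:Z - 1))).
  apply: eq_bigr => w _; rewrite big_split /= prod_ind; by [].
rewrite -(bigA_distr_bigA (fun (j : 'I_n) (y : 'I_3) =>
            (y != c)%:R * wt p ((nat_of_ord y)%:Z - 1))) /=.
rewrite (eq_bigr (fun _ => 1 - p)) ?prodr_const ?card_ord // => j _.
rewrite sum3 /wt !inordK //.
case: c hc => [[|[|[|k]]] hk] //= _.
- by rewrite -!val_eqE /= !inordK //=; rewrite mulr2n; ring.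
- by rewrite -!val_eqE /= !inordK //=; rewrite mulr2n; ring.
Qed.
Lemma PrE (R : nzRingType) n (p : R) (E : pred (outcome n)) :
  Pr p E = \sum_(w : outcome n) (E w)%:R * Pr_out p w.
Proof.
rewrite /Pr big_mkcond; apply: eq_bigr => w _.
by case: (E w); rewrite ?mul1r ?mul0r.
Qed.

Lemma Pr_decomp (R : comNzRingType) n (p : R) (tau : outcome n.+1 -> 'I_n.+1) :
  Pr p (win tau) = \sum_(x : 'I_3) wt p ((nat_of_ord x)%:Z - 1) *
     \sum_(w : outcome n) (win tau (fcons x w))%:R * Pr_out p w.
Proof.
rewrite PrE sum_split; apply: eq_bigr => x _; rewrite mulr_sumr.
by apply: eq_bigr => w _; rewrite Pr_out_cons mulrCA.
Qed.

Lemma inner_stop (R : comNzRingType) n (p : R) (tau : outcome n.+1 -> 'I_n.+1) x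
  (h : forall w, tau (fcons x w) = ord0) :
  \sum_(w : outcome n) (win tau (fcons x w))%:R * Pr_out p w
    = (nat_of_ord x != 1%N)%:R * (1 - p) ^+ n.
Proof.
under eq_bigr => w _ do rewrite win_alt h fcons0 forall_shift.
under eq_bigr => w _ do under eq_forallb => j do rewrite fconsS /=.
case: (boolP (nat_of_ord x != 1%N)) => hx /=.
  by rewrite mul1r -(stop_val n p hx).
by rewrite mul0r big1 // => w _; rewrite mul0r.
Qed.

Definition tshift n (tau : outcome n.+2 -> 'I_n.+2) (x : 'I_3) (w : outcome n.+1)
  : 'I_n.+1 := odflt ord0 (unlift ord0 (tau (fcons x w))).

Lemma tshiftE n (tau : outcome n.+2 -> 'I_n.+2) x w :
  tau (fcons x w) != ord0 -> tau (fcons x w) = lift ord0 (tshift tau x w).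
Proof.
rewrite eq_sym => /unlift_some [j e1 e2].
by rewrite /tshift e2 /=.
Qed.

Lemma inner_go n (tau : outcome n.+2 -> 'I_n.+2) x w :
  tau (fcons x w) != ord0 -> win tau (fcons x w) = win (tshift tau x) w.
Proof.
move=> /tshiftE e; rewrite !win_alt e fconsS forall_shift lift0.
by congr (_ && _); apply: eq_forallb => j; rewrite fconsS ltnS.
Qed.

Lemma stop_same n (tau : outcome n.+1 -> 'I_n.+1) x w1 w2 :
  stopping_time tau -> tau (fcons x w1) = ord0 -> tau (fcons x w2) = ord0.
Proof.
move=> st e; rewrite -e; apply: st => j; rewrite e leqn0 => /eqP j0.
have -> : j = ord0 by apply: val_inj.
by rewrite !fcons0.
Qed.

Lemma tshift_st n (tau : outcome n.+2 -> 'I_n.+2) x :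
  stopping_time tau -> stopping_time (tshift tau x).
Proof.
move=> st w1 w2 H; rewrite /tshift.
suff -> : tau (fcons x w2) = tau (fcons x w1) by [].
case: (eqVneq (tau (fcons x w1)) ord0) => [e|ne].
  by rewrite e; exact: stop_same st e.
apply: st => i; rewrite (tshiftE ne) lift0.
case: (unliftP ord0 i) => [j ->|->]; last by rewrite !fcons0.
by rewrite lift0 ltnS => hj; rewrite !fconsS H.
Qed.
Lemma wt_ge0 (R : realFieldType) (p : R) (hp0 : 0 < p) (hp1 : p <= 2^-1) v :
  0 <= wt p v.
Proof. rewrite /wt; case: ifP => _; rewrite ?mulr2n; lra. Qed.

Fixpoint vopt (R : realFieldType) (p : R) (m : nat) : R :=
  match m with
  | 0 => 0
  | m'.+1 => \sum_(x : 'I_3) wt p ((nat_of_ord x)%:Z - 1) *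
      Num.max ((nat_of_ord x != 1%N)%:R * (1 - p) ^+ m') (vopt p m')
  end.

Lemma vopt_S (R : realFieldType) (p : R) m : vopt p m.+1 =
  \sum_(x : 'I_3) wt p ((nat_of_ord x)%:Z - 1) *
      Num.max ((nat_of_ord x != 1%N)%:R * (1 - p) ^+ m) (vopt p m).
Proof. by []. Qed.

Definition w0 n : outcome n := [ffun => ord0].

Lemma bound_A (R : realFieldType) (p : R) (hp0 : 0 < p) (hp1 : p <= 2^-1) m
  (tau : outcome m.+1 -> 'I_m.+1) : stopping_time tau -> Pr p (win tau) <= vopt p m.+1.
Proof.
elim: m tau => [|m IH] tau st; rewrite Pr_decomp vopt_S; apply: ler_sum => x _;
  apply: ler_wpM2l; rewrite ?wt_ge0 //.
  rewrite inner_stop; first by rewrite le_max lexx.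
  by move=> w; rewrite [LHS]ord1.
case: (eqVneq (tau (fcons x (w0 m.+1))) ord0) => [e|ne].
  rewrite inner_stop; first by rewrite le_max lexx.
  by move=> w; exact: stop_same st e.
have ne' : forall w, tau (fcons x w) != ord0.
  move=> w; apply: contra_neq ne => e; exact: stop_same st e.
rewrite (eq_bigr (fun w => (win (tshift tau x) w)%:R * Pr_out p w)); last first.
  by move=> w _; rewrite inner_go.
rewrite -PrE le_max; apply/orP; right; apply: IH; exact: tshift_st.
Qed.
Definition Wf (R : nzRingType) (p : R) (N : nat) : R :=
  ((1 - p) ^+ N - (1 - p *+ 2) ^+ N) *+ 2.

Lemma Xneq0 (a : 'I_3) : ((nat_of_ord a)%:Z - 1 != 0) = (nat_of_ord a != 1%N).
Proof. by case: a => [[|[|[|k]]] hk]. Qed.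

Lemma thr_cons k (s : 'I_k.+2) x (w : outcome k.+1) :
  thr_rule s (fcons x w) =
  if (nat_of_ord s == 0%N) && (nat_of_ord x != 1%N) then ord0
  else lift ord0 (thr_rule (inord s.-1 : 'I_k.+1) w).
Proof.
rewrite /thr_rule enum_ordSl /= {1}/X fcons0 Xneq0 leqn0.
case: ifP => // _.
rewrite filter_map.
set l := filter _ _.
set l' := filter _ _.
have -> : l = l'.
  apply: eq_filter => j /=; rewrite /X fconsS inordK; last first.
    by have := ltn_ord s; lia.
  have e : forall a b : nat, (a <= b.+1)%N = (a.-1 <= b)%N by case.
  by rewrite /bump add1n e.
case: l' => [|a l''] //=.
by apply: val_inj.
Qed.

Lemma win_ext n (t1 t2 : outcome n -> 'I_n) w :
  t1 w = t2 w -> win t1 w = win t2 w.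
Proof. by rewrite /win => ->. Qed.
Lemma inner_thr (R : comNzRingType) (p : R) k (s : 'I_k.+2) x :
  \sum_(w : outcome k.+1) (win (thr_rule s) (fcons x w))%:R * Pr_out p w =
  if (nat_of_ord s == 0%N) && (nat_of_ord x != 1%N) then (1 - p) ^+ k.+1
  else Pr p (win (thr_rule (inord s.-1 : 'I_k.+1))).
Proof.
case: ifP => c.
  rewrite inner_stop; first by move: c => /andP [_ ->]; rewrite mul1r.
  by move=> w; rewrite thr_cons c.
rewrite PrE; apply: eq_bigr => w _.
have ne : thr_rule s (fcons x w) != ord0 by rewrite thr_cons c eq_sym neq_lift.
rewrite inner_go //; congr (_%:R * _).
have e : tshift (thr_rule s) x w = thr_rule (inord s.-1) w.
  by rewrite /tshift (thr_cons s x w) c liftK.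
by rewrite /win e.
Qed.

Lemma Wf_S (R : comNzRingType) (p : R) N :
  Wf p N.+1 = p *+ 2 * (1 - p) ^+ N + (1 - p *+ 2) * Wf p N.
Proof.
rewrite /Wf !exprS.
set A := (1 - p) ^+ N; set B := (1 - p *+ 2) ^+ N.
clearbody A B; rewrite !mulr2n; ring.
Qed.

Lemma thr_val (R : comNzRingType) (p : R) m (s : 'I_m.+1) :
  Pr p (win (thr_rule s)) = Wf p (m.+1 - s).
Proof.
elim: m s => [|k IH] s.
  have -> : s = ord0 by apply: ord1.
  rewrite Pr_decomp subn0.
  rewrite (eq_bigr (fun x : 'I_3 => wt p ((nat_of_ord x)%:Z - 1) *
             ((nat_of_ord x != 1%N)%:R * (1 - p) ^+ 0))); last first.
    by move=> x _; rewrite inner_stop // => w; apply: ord1.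
  rewrite sum3 !inordK // /wt /Wf /=.
  rewrite !expr0 !expr1 !mulr2n; ring.
rewrite Pr_decomp.
under eq_bigr => x _ do rewrite inner_thr.
rewrite sum3 !inordK //=.
case: eqP => s0.
  rewrite /= IH s0 /= inordK // !subn0 [in RHS]Wf_S.
  rewrite /wt /= !mulr2n; ring.
rewrite /= IH inordK; last by have := ltn_ord s; lia.
have -> : (k.+1 - s.-1 = k.+2 - s)%N by have := ltn_ord s; lia.
rewrite -!mulrDl.
have := sum_wt p; rewrite sum3 !inordK // => ->; by rewrite mul1r.
Qed.
Lemma vopt_ge0 (R : realFieldType) (p : R) (hp0 : 0 < p) (hp1 : p <= 2^-1) m :
  0 <= vopt p m.
Proof.
elim: m => [|m IH] //=; apply: sumr_ge0 => x _; apply: mulr_ge0; first exact: wt_ge0.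
by rewrite le_max IH orbT.
Qed.

Lemma vopt_rec (R : realFieldType) (p : R) (hp0 : 0 < p) (hp1 : p <= 2^-1) m :
  vopt p m.+1 = p *+ 2 * Num.max ((1 - p) ^+ m) (vopt p m) + (1 - p *+ 2) * vopt p m.
Proof.
rewrite vopt_S sum3 !inordK // /wt /=.
rewrite mul0r (max_r (vopt_ge0 hp0 hp1 m)) !mul1r mulr2n; ring.
Qed.

Lemma expn_anti (R : realFieldType) (a : R) (ha0 : 0 <= a) (ha1 : a <= 1) N K :
  (N <= K)%N -> a ^+ K <= a ^+ N.
Proof.
move=> h; rewrite -(subnK h) exprD.
have h1 := exprn_ile1 (K - N) ha0 ha1.
have h2 := exprn_ge0 N ha0.
have h3 : 0 <= (1 - a ^+ (K - N)) * a ^+ N by apply: mulr_ge0; lra.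
move: h3; set X := a ^+ (K - N); set Y := a ^+ N; move=> h3.
clearbody X Y; nra.
Qed.

Lemma Wge_up (R : realFieldType) (p : R) (hp0 : 0 < p) (hp1 : p <= 2^-1) N :
  (1 - p) ^+ N <= Wf p N -> (1 - p) ^+ N.+1 <= Wf p N.+1.
Proof.
move=> h; rewrite Wf_S exprS.
have hA := exprn_ge0 N (_ : 0 <= 1 - p).
move: h hA; set A := (1 - p) ^+ N; set W := Wf p N => h hA.
have hA' : 0 <= A by apply: hA; lra.
have h1 : 0 <= (1 - p *+ 2) * (W - A) by apply: mulr_ge0; rewrite ?mulr2n; lra.
have h2 : 0 <= p * A by apply: mulr_ge0; lra.
clearbody A W; rewrite mulr2n in h1 *; nra.
Qed.

Lemma Wge_mono (R : realFieldType) (p : R) (hp0 : 0 < p) (hp1 : p <= 2^-1) N K :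
  (N <= K)%N -> (1 - p) ^+ N <= Wf p N -> (1 - p) ^+ K <= Wf p K.
Proof.
move=> h; rewrite -(subnK h); elim: (K - N)%N => [|d IH] //= H.
by rewrite addSn; apply: Wge_up => //; apply: IH.
Qed.
Lemma vopt_W1 (R : realFieldType) (p : R) (hp0 : 0 < p) (hp1 : p <= 2^-1) M
  (hM : Wf p M < (1 - p) ^+ M) N : (N <= M.+1)%N -> vopt p N = Wf p N.
Proof.
elim: N => [|N IH] hN.
  by rewrite /Wf !expr0 subrr mul0rn.
rewrite vopt_rec // IH ?(ltnW hN) //.
have lt : Wf p N < (1 - p) ^+ N.
  rewrite ltNge; apply/negP => H.
  have hNM : (N <= M)%N by rewrite -ltnS.
  by have := Wge_mono hp0 hp1 hNM H; rewrite leNgt hM.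
rewrite max_l; last exact: ltW.
by rewrite Wf_S.
Qed.

Lemma vopt_W2 (R : realFieldType) (p : R) (hp0 : 0 < p) (hp1 : p <= 2^-1) M
  (hM : (1 - p) ^+ M <= Wf p M) (h1 : forall N, (N <= M)%N -> vopt p N = Wf p N) d :
  vopt p (M + d) = Wf p M.
Proof.
elim: d => [|d IH]; first by rewrite addn0 h1.
rewrite addnS vopt_rec // IH max_r; last first.
  apply: le_trans hM; apply: expn_anti; rewrite ?leq_addr //; lra.
set W := Wf p M; clearbody W; rewrite mulr2n; ring.
Qed.

Theorem mainTheorem8 (R : realFieldType) (n : nat) (p : R)
  (hp0 : 0 < p) (hp1 : p <= 2^-1)
  (s : 'I_n)
  (hs : Wk p s / Vk p s < 1)
  (hsmin : forall k : 'I_n, (k < s)%N -> ~ (Wk p k / Vk p k < 1)) :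
  forall tau : outcome n -> 'I_n, stopping_time tau ->
    Pr p (win tau) <= Pr p (win (thr_rule s)).
Proof.
move=> tau st.
move: s hs hsmin tau st; case: n => [|m] s; first by case: s.
move=> hs hsmin tau st.
apply: le_trans (bound_A hp0 hp1 st) _.
rewrite thr_val.
have ha : 0 < 1 - p by lra.
have hs' : Wf p (m.+1 - s.+1) < (1 - p) ^+ (m.+1 - s.+1).
  move: hs; change (Wf p (m.+1 - s.+1) / (1 - p) ^+ (m.+1 - s.+1) < 1 ->
     Wf p (m.+1 - s.+1) < (1 - p) ^+ (m.+1 - s.+1)).
  by rewrite ltr_pdivrMr ?mul1r // exprn_gt0.
have c1 := vopt_W1 hp0 hp1 hs'.
have hsm := ltn_ord s.
case: (eqVneq (nat_of_ord s) 0%N) => s0.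
  by rewrite s0 subn0 c1 //; lia.
have hk : (s.-1 < m.+1)%N by lia.
have hks : (Ordinal hk < s)%N by rewrite /=; lia.
have := hsmin _ hks.
change (~ (Wf p (m.+1 - s.-1.+1) / (1 - p) ^+ (m.+1 - s.-1.+1) < 1)
   -> vopt p m.+1 <= Wf p (m.+1 - s)).
rewrite ltr_pdivrMr ?mul1r ?exprn_gt0 // => /negP; rewrite -leNgt => hW.
have e2 : (m.+1 - s.-1.+1 = m.+1 - s)%N by lia.
rewrite e2 in hW.
have h1 : forall N, (N <= m.+1 - s)%N -> vopt p N = Wf p N.
  by move=> N hN; apply: c1; lia.
have := vopt_W2 hp0 hp1 hW h1 (m.+1 - (m.+1 - s)).
by rewrite subnKC ?leq_subr // => ->.
Qed.
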